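(* Let $(v,u,\theta)$ be a (sufficiently regular) solution on $\Omega_T:=\{(t,y):0\le t\le T,\ y>Y(t)\}$ of the Lagrangian free boundary problem $$v_t-u_y=0,\qquad u_t+P_y=\Big(\frac{\mu u_y}{v}\Big)_y,\qquad \Big(c_v\theta+\frac{u^2}{2}\Big)_t+(Pu)_y=\Big(\frac{\kappa\theta_y}{v}+\frac{\mu uu_y}{v}\Big)_y,$$ $P=R\theta/v$, with $(u,\theta)(t,Y(t))=(u_-,\theta_-)$ and $(v,u,\theta)(0,y)=(v_0,u_0,\theta_0)(y)$, where $Y$ is nondecreasing with $Y(0)=0$, and with sufficient decay at $y=\infty$ for the integrals below to make sense. Let $(\tau,z)\in\Omega_T$. Then for all $t\in[0,\tau]$ and all $y\in I_z(\tau):=(Y(\tau),\infty)\cap([z]-1,[z]+4)$, $$v(t,y)=B_z(t,y)A_z(t)+\frac{R}{\mu}\int_0^t\frac{B_z(t,y)A_z(t)}{B_z(s,y)A_z(s)}\,\theta(s,y)\,ds,$$ where $$B_z(t,y):=v_0(y)\exp\Big\{\frac1\mu\int_y^\infty(u_0(\xi)-u(t,\xi))\varphi_z(\xi)\,d\xi\Big\},\qquad A_z(t):=\exp\Big\{\frac1\mu\int_0^t\!\!\int_{[z]+4}^{[z]+5}\Big(\frac{\mu u_y}{v}-P\Big)d\xi\,ds\Big\}.$$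
   Context: $\mu,\kappa,R>0$, $c_v>0$ constants. $[\cdot]$ denotes the integer part. The cutoff $\varphi_z\in W^{1,\infty}(\mathbb{R})$ with parameter $z\in\mathbb{R}$ is $\varphi_z(y)=1$ for $y<[z]+4$, $\varphi_z(y)=[z]+5-y$ for $[z]+4\le y<[z]+5$, $\varphi_z(y)=0$ for $y\ge[z]+5$. In the paper, $Y(t)=-u_-\int_0^t\rho(s,0)ds$ with $u_-<0$ and $v=1/\rho$ is the specific volume. *)

(* Defs.v *)
From Stdlib Require Import Reals Lra ClassicalEpsilon.
Open Scope R_scope.

(* Total Riemann integral: the Riemann integral of f on [a,b] when it exists, 0 otherwise. *)
Definition RInt (f : R -> R) (a b : R) : R :=
  match excluded_middle_informative (inhabited (Riemann_integrable f a b)) with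
  | left H => RiemannInt (epsilon H (fun _ => True))
  | right _ => 0
  end.

(* Improper integral int_a^infty f = lim_{b -> infty} int_a^b f (0 if the limit does not exist). *)
Definition conv_inf (f : R -> R) (a l : R) : Prop :=
  forall eps, eps > 0 -> exists M, forall b, b >= M -> Rabs (RInt f a b - l) < eps.

Definition RInt_inf (f : R -> R) (a : R) : R :=
  match excluded_middle_informative (exists l, conv_inf f a l) with
  | left H => proj1_sig (constructive_indefinite_description _ H)
  | right _ => 0
  end.

Definition ipart (z : R) : R := IZR (Int_part z).

Definition phi (z y : R) : R :=
  if Rlt_dec y (ipart z + 4) then 1
  else if Rlt_dec y (ipart z + 5) then ipart z + 5 - y
  else 0.

Definition Omega (T : R) (Y : R -> R) (t y : R) : Prop := 0 <= t <= T /\ Y t < y.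

Definition cont_on2 (D : R -> R -> Prop) (f : R -> R -> R) : Prop :=
  forall t y, D t y -> forall eps, eps > 0 -> exists delta, delta > 0 /\
    forall s x, D s x -> Rabs (s - t) < delta -> Rabs (x - y) < delta ->
      Rabs (f s x - f t y) < eps.

Definition Bz (mu : R) (v0 u0 : R -> R) (u : R -> R -> R) (z t y : R) : R :=
  v0 y * exp (/ mu * RInt_inf (fun xi => (u0 xi - u t xi) * phi z xi) y).

(* A_z(t), with uy the spatial derivative u_y and P = Rg * th / v *)
Definition Az (mu Rg : R) (v uy th : R -> R -> R) (z t : R) : R :=
  exp (/ mu * RInt (fun s => RInt (fun xi => mu * uy s xi / v s xi - Rg * th s xi / v s xi)
                                   (ipart z + 4) (ipart z + 5)) 0 t).

(* Main.v *)
Require Import Defs.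
From Stdlib Require Import Reals Lra ClassicalEpsilon.
From Coquelicot Require Import Coquelicot.
Open Scope R_scope.

Lemma DRInt_eq f a b : ex_RInt f a b -> Defs.RInt f a b = RInt f a b.
Proof.
  intros H. unfold Defs.RInt.
  destruct (excluded_middle_informative _) as [Hi|Hn].
  - rewrite (RInt_Reals f a b (epsilon Hi (fun _ => True))). reflexivity.
  - exfalso. apply Hn. constructor. now apply ex_RInt_Reals_0.
Qed.

Lemma conv_inf_uniq f a l l' : conv_inf f a l -> conv_inf f a l' -> l = l'.
Proof.
  intros H1 H2. destruct (Req_dec l l') as [|Hne]; auto.
  set (e := Rabs (l - l') / 2).
  assert (He : e > 0) by (unfold e; assert (l - l' <> 0) by lra; pose proof (Rabs_pos_lt _ H); lra).
  destruct (H1 e He) as [M1 HM1]. destruct (H2 e He) as [M2 HM2].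
  specialize (HM1 (Rmax M1 M2) (Rle_ge _ _ (Rmax_l _ _))).
  specialize (HM2 (Rmax M1 M2) (Rle_ge _ _ (Rmax_r _ _))).
  exfalso. unfold e in *.
  assert (Rabs (l - l') <= Rabs (Defs.RInt f a (Rmax M1 M2) - l) + Rabs (Defs.RInt f a (Rmax M1 M2) - l')).
  { replace (l - l') with (-(Defs.RInt f a (Rmax M1 M2) - l) + (Defs.RInt f a (Rmax M1 M2) - l')) by ring.
    eapply Rle_trans. apply Rabs_triang. rewrite Rabs_Ropp. lra. }
  lra.
Qed.

Lemma RInt_inf_eq f a l : conv_inf f a l -> RInt_inf f a = l.
Proof.
  intros H. unfold RInt_inf. destruct (excluded_middle_informative _) as [Hi|Hn].
  - destruct (constructive_indefinite_description _ Hi) as [l' Hl']. simpl.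
    eapply conv_inf_uniq; eauto.
  - exfalso; apply Hn; eauto.
Qed.

Lemma c2d_r f s x : continuity_2d_pt f s x -> continuous (fun xi => f s xi) x.
Proof.
  intros H. apply continuity_pt_filterlim.
  unfold continuity_pt, continue_in, limit1_in, limit_in; simpl; unfold R_dist.
  intros eps Heps. destruct (H (mkposreal eps Heps)) as [d Hd].
  exists d; split; [apply cond_pos|]. intros x' [_ Hx'].
  apply Hd; [rewrite Rminus_eq_0, Rabs_R0; apply cond_pos | exact Hx'].
Qed.

Lemma c2d_l f s x : continuity_2d_pt f s x -> continuous (fun r => f r x) s.
Proof.
  intros H. apply continuity_pt_filterlim.
  unfold continuity_pt, continue_in, limit1_in, limit_in; simpl; unfold R_dist.
  intros eps Heps. destruct (H (mkposreal eps Heps)) as [d Hd].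
  exists d; split; [apply cond_pos|]. intros x' [_ Hx'].
  apply Hd; [exact Hx' | rewrite Rminus_eq_0, Rabs_R0; apply cond_pos].
Qed.

Lemma param_cont f c d : (forall s xi, continuity_2d_pt f s xi) -> c <= d ->
  forall s, continuity_pt (fun s => RInt (fun xi => f s xi) c d) s.
Proof.
  intros Hf Hcd s.
  assert (Hex : forall s', ex_RInt (fun xi => f s' xi) c d).
  { intros s'. apply (@ex_RInt_continuous R_CompleteNormedModule). intros z _. apply c2d_r, Hf. }
  unfold continuity_pt, continue_in, limit1_in, limit_in; simpl; unfold R_dist.
  intros eps Heps.
  assert (He' : 0 < eps / (d - c + 1)) by (apply Rdiv_lt_0_compat; lra).
  destruct (uniform_continuity_2d_1d' f c d s (fun x _ => Hf s x) (mkposreal _ He')) as [delta Hd].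
  exists delta; split; [apply cond_pos|]. intros s' [_ Hs'].
  assert (E : RInt (fun xi => f s' xi) c d - RInt (fun xi => f s xi) c d = RInt (fun xi => f s' xi - f s xi) c d)
    by (symmetry; exact (RInt_minus (fun xi => f s' xi) (fun xi => f s xi) c d (Hex s') (Hex s))).
  rewrite E.
  eapply Rle_lt_trans. apply abs_RInt_le_const with (M := eps / (d - c + 1)).
  - exact Hcd.
  - exact (@ex_RInt_minus R_NormedModule _ _ c d (Hex s') (Hex s)).
  - intros t Ht. left. pose proof (cond_pos delta). apply Rabs_def2 in Hs'.
    apply (Hd t s t s'); try lra. rewrite Rminus_eq_0, Rabs_R0; lra.
  - pose proof (cond_pos delta).
    assert ((d - c) * (eps / (d - c + 1)) < eps); [|lra].
    apply Rlt_le_trans with ((d - c + 1) * (eps / (d - c + 1))).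
    + apply Rmult_lt_compat_r; lra.
    + right. field. lra.
Qed.

Definition clamp lo hi x := Rmax lo (Rmin hi x).

Lemma clamp_in lo hi x : lo <= hi -> lo <= clamp lo hi x <= hi.
Proof. intros H. unfold clamp, Rmax, Rmin. repeat destruct Rle_dec; lra. Qed.

Lemma clamp_id lo hi x : lo <= x <= hi -> clamp lo hi x = x.
Proof. intros H. unfold clamp, Rmax, Rmin. repeat destruct Rle_dec; lra. Qed.

Lemma clamp_lip lo hi x x' : lo <= hi -> Rabs (clamp lo hi x - clamp lo hi x') <= Rabs (x - x').
Proof.
  intros H. unfold clamp, Rmax, Rmin.
  repeat destruct Rle_dec; unfold Rabs; repeat destruct Rcase_abs; lra.
Qed.

Lemma clamp_cont (D : R -> R -> Prop) f lo1 hi1 lo2 hi2 :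
  lo1 <= hi1 -> lo2 <= hi2 -> cont_on2 D f ->
  (forall s xi, lo1 <= s <= hi1 -> lo2 <= xi <= hi2 -> D s xi) ->
  forall s xi, continuity_2d_pt (fun s xi => f (clamp lo1 hi1 s) (clamp lo2 hi2 xi)) s xi.
Proof.
  intros H1 H2 Hc HD s xi eps.
  destruct (Hc _ _ (HD _ _ (clamp_in _ _ s H1) (clamp_in _ _ xi H2)) eps (cond_pos eps)) as [d [Hd Hd']].
  exists (mkposreal d Hd). intros u v Hu Hv. simpl in *.
  apply Hd'.
  - apply HD; apply clamp_in; auto.
  - eapply Rle_lt_trans; [apply clamp_lip; auto | exact Hu].
  - eapply Rle_lt_trans; [apply clamp_lip; auto | exact Hv].
Qed.

Lemma cont_slice T Y f t xi : cont_on2 (Omega T Y) f -> Omega T Y t xi ->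
  continuous (fun x => f t x) xi.
Proof.
  intros Hc HO. apply continuity_pt_filterlim.
  unfold continuity_pt, continue_in, limit1_in, limit_in; simpl; unfold R_dist.
  intros eps Heps. destruct (Hc t xi HO eps Heps) as [d [Hd Hd']].
  destruct HO as [HT HY].
  exists (Rmin d (xi - Y t)); split; [apply Rmin_pos; lra|].
  intros x [_ Hx].
  apply Hd'.
  - split; auto. pose proof (Rmin_r d (xi - Y t)).
    apply Rabs_def2 in Hx. lra.
  - rewrite Rminus_eq_0, Rabs_R0; lra.
  - pose proof (Rmin_l d (xi - Y t)). lra.
Qed.

Lemma Rex_cont (f : R -> R) a b : (forall x, Rmin a b <= x <= Rmax a b -> continuous f x) -> ex_RInt f a b.
Proof. intros H. exact (@ex_RInt_continuous R_CompleteNormedModule f a b H). Qed.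

Lemma RChasles (f : R -> R) a b c : ex_RInt f a b -> ex_RInt f b c -> RInt f a c = RInt f a b + RInt f b c.
Proof. intros H1 H2. symmetry. exact (@RInt_Chasles R_CompleteNormedModule f a b c H1 H2). Qed.

Lemma Rex_Chasles (f : R -> R) a b c : ex_RInt f a b -> ex_RInt f b c -> ex_RInt f a c.
Proof. intros H1 H2. exact (@ex_RInt_Chasles R_NormedModule f a b c H1 H2). Qed.

Lemma RIext (f g : R -> R) a b : (forall x, Rmin a b < x < Rmax a b -> f x = g x) -> RInt f a b = RInt g a b.
Proof. intros H. exact (@RInt_ext R_CompleteNormedModule f g a b H). Qed.

Lemma RIex_ext (f g : R -> R) a b : (forall x, Rmin a b < x < Rmax a b -> f x = g x) -> ex_RInt f a b -> ex_RInt g a b.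
Proof. intros H. exact (@ex_RInt_ext R_NormedModule f g a b H). Qed.

Lemma RInt_zero a b : RInt (fun _ => 0) a b = 0.
Proof. rewrite (@RInt_const R_CompleteNormedModule). simpl. unfold scal; simpl; unfold mult; simpl. ring. Qed.

Lemma Rminus_int (f g : R -> R) a b : ex_RInt f a b -> ex_RInt g a b ->
  RInt (fun x => f x - g x) a b = RInt f a b - RInt g a b.
Proof. intros H1 H2. exact (@RInt_minus R_CompleteNormedModule f g a b H1 H2). Qed.

Lemma Rscal_int (f : R -> R) a b l : ex_RInt f a b -> RInt (fun x => l * f x) a b = l * RInt f a b.
Proof. intros H. exact (@RInt_scal R_CompleteNormedModule f a b l H). Qed.

Lemma FTC_R (g : R -> R) s0 : (forall s, continuous g s) -> is_derive (fun s => RInt g 0 s) s0 (g s0).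
Proof.
  intros Hg. apply (@is_derive_RInt R_NormedModule g (fun s => RInt g 0 s) 0 s0).
  - exists (mkposreal 1 Rlt_0_1). intros r _. apply (@RInt_correct R_CompleteNormedModule).
    apply Rex_cont. intros; apply Hg.
  - apply Hg.
Qed.

Lemma ball_R x e r : ball x e r -> Rabs (r - x) < e.
Proof. intros H. exact H. Qed.

Lemma param_deriv (f df : R -> R -> R) c d x (delta : posreal) :
  (forall s xi, Rabs (s - x) < delta -> is_derive (fun r => f r xi) s (df s xi)) ->
  (forall s xi, continuity_2d_pt df s xi) ->
  (forall s, ex_RInt (fun xi => f s xi) c d) ->
  is_derive (fun s => RInt (fun xi => f s xi) c d) x (RInt (fun xi => df x xi) c d).
Proof.
  intros Hd Hc He.
  assert (HD : forall s xi, Rabs (s - x) < delta -> Derive (fun r => f r xi) s = df s xi).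
  { intros s xi Hs. apply is_derive_unique. apply Hd; auto. }
  assert (E : RInt (fun xi => df x xi) c d = RInt (fun xi => Derive (fun u => f u xi) x) c d).
  { apply RIext. intros xi _. symmetry. apply HD. rewrite Rminus_eq_0, Rabs_R0. apply cond_pos. }
  rewrite E.
  apply (is_derive_RInt_param f c d x).
  - exists delta. intros s Hs t _. eexists. apply Hd. apply ball_R, Hs.
  - intros t _. apply continuity_2d_pt_ext_loc with (f := df).
    + exists delta. intros u v Hu _. symmetry. apply HD; auto.
    + apply Hc.
  - exists delta. intros s _. apply He.
Qed.

Lemma cpt_mult (f g : R -> R) x : continuity_pt f x -> continuity_pt g x -> continuity_pt (fun s => f s * g s) x.
Proof. intros; now apply continuity_pt_mult. Qed.
Lemma cpt_plus (f g : R -> R) x : continuity_pt f x -> continuity_pt g x -> continuity_pt (fun s => f s + g s) x.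
Proof. intros; now apply continuity_pt_plus. Qed.
Lemma cpt_minus (f g : R -> R) x : continuity_pt f x -> continuity_pt g x -> continuity_pt (fun s => f s - g s) x.
Proof. intros; now apply continuity_pt_minus. Qed.
Lemma cpt_const c x : continuity_pt (fun _ => c) x.
Proof. apply continuity_pt_const. intros ? ?; reflexivity. Qed.
Lemma cpt_exp (f : R -> R) x : continuity_pt f x -> continuity_pt (fun s => exp (f s)) x.
Proof. intros H. apply (continuity_pt_comp f exp x H). apply derivable_continuous_pt, derivable_pt_exp. Qed.
Lemma cpt_opp (f : R -> R) x : continuity_pt f x -> continuity_pt (fun s => - f s) x.
Proof. intros; now apply continuity_pt_opp. Qed.
Lemma cpt_of (f : R -> R) x : continuous f x -> continuity_pt f x.
Proof. intros H. now apply continuity_pt_filterlim. Qed.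
Lemma of_cpt (f : R -> R) x : continuity_pt f x -> continuous f x.
Proof. intros H. now apply continuity_pt_filterlim. Qed.

Lemma dR_val (f : R -> R) (x l l' : R) : l = l' -> is_derive f x l -> is_derive f x l'.
Proof. intros ->; auto. Qed.
Lemma dR_minus (f g : R -> R) x df dg : is_derive f x df -> is_derive g x dg ->
  is_derive (fun s => f s - g s) x (df - dg).
Proof. intros H1 H2. apply is_derive_Reals in H1, H2. apply is_derive_Reals. exact (derivable_pt_lim_minus f g x df dg H1 H2). Qed.
Lemma dR_plus (f g : R -> R) x df dg : is_derive f x df -> is_derive g x dg ->
  is_derive (fun s => f s + g s) x (df + dg).
Proof. intros H1 H2. apply is_derive_Reals in H1, H2. apply is_derive_Reals. exact (derivable_pt_lim_plus f g x df dg H1 H2). Qed.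
Lemma dR_mult (f g : R -> R) x df dg : is_derive f x df -> is_derive g x dg ->
  is_derive (fun s => f s * g s) x (df * g x + f x * dg).
Proof. intros H1 H2. apply is_derive_Reals in H1, H2. apply is_derive_Reals. exact (derivable_pt_lim_mult f g x df dg H1 H2). Qed.
Lemma dR_const c x : is_derive (fun _ => c) x 0.
Proof. apply is_derive_Reals. exact (derivable_pt_lim_const c x). Qed.
Lemma dR_id x : is_derive (fun s => s) x 1.
Proof. apply is_derive_Reals. exact (derivable_pt_lim_id x). Qed.
Lemma dR_exp (f : R -> R) x df : is_derive f x df -> is_derive (fun s => exp (f s)) x (exp (f x) * df).
Proof. intros H1. apply is_derive_Reals in H1. apply is_derive_Reals.
  exact (derivable_pt_lim_comp f exp x df (exp (f x)) H1 (derivable_pt_lim_exp _)). Qed.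
Lemma dR_opp (f : R -> R) x df : is_derive f x df -> is_derive (fun s => - f s) x (- df).
Proof. intros H1. apply is_derive_Reals in H1. apply is_derive_Reals. exact (derivable_pt_lim_opp f x df H1). Qed.
Lemma dR_scal (f : R -> R) k x df : is_derive f x df -> is_derive (fun s => k * f s) x (k * df).
Proof. apply is_derive_scal. Qed.
Lemma cpt_id x : continuity_pt (fun s => s) x.
Proof. apply continuity_pt_id. Qed.

Theorem lemma2p5
  (mu kappa Rg cv T um thm : R) (Y : R -> R)
  (v u th : R -> R -> R) (v0 u0 th0 : R -> R)
  (vt ut uy thy Et Py Sy PUy Qy : R -> R -> R)
  (Hmu : 0 < mu) (Hkappa : 0 < kappa) (HRg : 0 < Rg) (Hcv : 0 < cv)
  (HY0 : Y 0 = 0) (HYmono : forall s t, s <= t -> Y s <= Y t)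
  (Hvpos : forall t y, Omega T Y t y -> 0 < v t y)
  (Hinit : forall y, 0 < y -> v 0 y = v0 y /\ u 0 y = u0 y /\ th 0 y = th0 y)
  (Hbdry : forall t, 0 <= t <= T -> u t (Y t) = um /\ th t (Y t) = thm)
  (Hdx : forall t y, Omega T Y t y ->
     derivable_pt_lim (fun xi => u t xi) y (uy t y) /\
     derivable_pt_lim (fun xi => th t xi) y (thy t y) /\
     derivable_pt_lim (fun xi => Rg * th t xi / v t xi) y (Py t y) /\
     derivable_pt_lim (fun xi => mu * uy t xi / v t xi) y (Sy t y) /\
     derivable_pt_lim (fun xi => Rg * th t xi / v t xi * u t xi) y (PUy t y) /\
     derivable_pt_lim (fun xi => kappa * thy t xi / v t xi + mu * u t xi * uy t xi / v t xi)
       y (Qy t y))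
  (Hdt : forall t y, 0 < t < T -> Y t < y ->
     derivable_pt_lim (fun s => v s y) t (vt t y) /\
     derivable_pt_lim (fun s => u s y) t (ut t y) /\
     derivable_pt_lim (fun s => cv * th s y + (u s y) ^ 2 / 2) t (Et t y))
  (Heq : forall t y, 0 < t < T -> Y t < y ->
     vt t y = uy t y /\ ut t y + Py t y = Sy t y /\ Et t y + PUy t y = Qy t y)
  (Hreg : cont_on2 (Omega T Y) v /\ cont_on2 (Omega T Y) u /\ cont_on2 (Omega T Y) th /\
          cont_on2 (Omega T Y) uy /\ cont_on2 (Omega T Y) vt /\ cont_on2 (Omega T Y) ut /\
          cont_on2 (Omega T Y) Py /\ cont_on2 (Omega T Y) Sy) :
  forall tau z, Omega T Y tau z ->
  forall t y, 0 <= t <= tau -> Y tau < y -> ipart z - 1 < y < ipart z + 4 ->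
    v t y = Bz mu v0 u0 u z t y * Az mu Rg v uy th z t
            + Rg / mu * Defs.RInt (fun s => (Bz mu v0 u0 u z t y * Az mu Rg v uy th z t)
                                      / (Bz mu v0 u0 u z s y * Az mu Rg v uy th z s)
                                      * th s y) 0 t.
Proof.
  intros tau z HOm t y Ht Hy Hyz.
  destruct Hreg as [Cv [Cu [Cth [Cuy [Cvt [Cut [CPy CSy]]]]]]].
  destruct HOm as [[Htau0 HtauT] HYz].
  pose proof (base_Int_part z) as [Hip1 Hip2].
  assert (Hipz : ipart z <= z < ipart z + 1) by (unfold ipart; lra).
  set (a := ipart z + 4). set (b := ipart z + 5).
  assert (Hya : y < a) by (unfold a; lra).
  assert (Hab : a < b) by (unfold a, b; lra).
  assert (Hba : b - a = 1) by (unfold a, b; ring).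
  assert (HYt : forall s, s <= tau -> Y s <= Y tau) by (intros; apply HYmono; auto).
  assert (Hy0 : 0 < y) by (pose proof (HYmono 0 tau Htau0); lra).
  assert (HR : forall s xi, 0 <= s <= tau -> y <= xi <= b -> Omega T Y s xi).
  { intros s xi Hs Hxi. split; [lra|]. pose proof (HYt s (proj2 Hs)). lra. }
  set (cs := clamp 0 tau). set (cx := clamp y b).
  assert (Hyb : y <= b) by lra.
  assert (Ccl : forall f, cont_on2 (Omega T Y) f -> forall s xi,
             continuity_2d_pt (fun s xi => f (cs s) (cx xi)) s xi).
  { intros f Hf. apply (clamp_cont (Omega T Y) f 0 tau y b); auto. }
  assert (HOcl : forall s xi, Omega T Y (cs s) (cx xi)).
  { intros s xi. apply HR; apply clamp_in; auto. }
  assert (Hcs : forall s, 0 <= s <= tau -> cs s = s) by (intros; apply clamp_id; auto).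
  assert (Hcx : forall xi, y <= xi <= b -> cx xi = xi) by (intros; apply clamp_id; auto).
  assert (Hphi1 : forall xi, xi < a -> phi z xi = 1).
  { intros xi H. unfold phi. fold a b. destruct (Rlt_dec xi a); lra. }
  assert (Hphi2 : forall xi, a <= xi < b -> phi z xi = b - xi).
  { intros xi H. unfold phi. fold a b. destruct (Rlt_dec xi a); [lra|]. destruct (Rlt_dec xi b); lra. }
  assert (Hphi3 : forall xi, b <= xi -> phi z xi = 0).
  { intros xi H. unfold phi. fold a b. destruct (Rlt_dec xi a); [lra|]. destruct (Rlt_dec xi b); lra. }
  set (tu := fun s xi => u (cs s) (cx xi)).
  set (tv := fun s xi => v (cs s) (cx xi)).
  set (tth := fun s xi => th (cs s) (cx xi)).
  set (tuy := fun s xi => uy (cs s) (cx xi)).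
  set (tut := fun s xi => ut (cs s) (cx xi)).
  assert (Ctu : forall s xi, continuity_2d_pt tu s xi) by (apply Ccl; auto).
  assert (Ctv : forall s xi, continuity_2d_pt tv s xi) by (apply Ccl; auto).
  assert (Ctth : forall s xi, continuity_2d_pt tth s xi) by (apply Ccl; auto).
  assert (Ctuy : forall s xi, continuity_2d_pt tuy s xi) by (apply Ccl; auto).
  assert (Ctut : forall s xi, continuity_2d_pt tut s xi) by (apply Ccl; auto).
  assert (Htv : forall s xi, 0 < tv s xi) by (intros; apply Hvpos, HOcl).
  set (tF := fun s xi => mu * tuy s xi / tv s xi - Rg * tth s xi / tv s xi).
  assert (CtF : forall s xi, continuity_2d_pt tF s xi).
  { intros s xi. unfold tF, Rdiv.
    assert (Hn : tv s xi <> 0) by (pose proof (Htv s xi); lra).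
    apply continuity_2d_pt_minus; apply continuity_2d_pt_mult;
      try (apply continuity_2d_pt_inv; auto);
      apply continuity_2d_pt_mult; auto; apply continuity_2d_pt_const. }
  set (ht := (fun s => RInt (fun xi => tF s xi) a b) : R -> R).
  set (g1 := fun s xi => tu 0 xi - tu s xi).
  set (g2 := fun s xi => (tu 0 xi - tu s xi) * (b - xi)).
  assert (Cg1 : forall s xi, continuity_2d_pt g1 s xi).
  { intros s xi. unfold g1. apply continuity_2d_pt_minus; auto.
    apply (continuity_2d_pt_ext_loc (fun s xi => tu 0 xi)).
    - exists (mkposreal 1 Rlt_0_1); auto.
    - intros eps. destruct (Ctu 0 xi eps) as [d Hd]. exists d. intros u' v' Hu Hv.
      apply Hd; auto. rewrite Rminus_eq_0, Rabs_R0. apply cond_pos. }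
  assert (Cg2 : forall s xi, continuity_2d_pt g2 s xi).
  { intros s xi. unfold g2. apply continuity_2d_pt_mult.
    - apply (Cg1 s xi).
    - apply continuity_2d_pt_minus; [apply continuity_2d_pt_const | apply continuity_2d_pt_id2]. }
  set (Gt := fun s => RInt (fun xi => g1 s xi) y a + RInt (fun xi => g2 s xi) a b).
  set (Htt := (fun s => RInt ht 0 s) : R -> R).
  set (Phi := fun s => / mu * (Gt s + Htt s)).
  set (J := fun s => tth s y * exp (- Phi s)).
  set (I := (fun s => RInt J 0 s) : R -> R).
  set (W := fun s => tv s y * exp (- Phi s) - Rg / mu * I s).
  assert (Cht : forall s, continuous ht s).
  { intros s. apply of_cpt. apply (param_cont tF a b CtF). lra. }
  assert (DHtt : forall s, is_derive Htt s (ht s)) by (intros; apply FTC_R; auto).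
  assert (CGt : forall s, continuity_pt Gt s).
  { intros s. unfold Gt. apply cpt_plus; apply param_cont; auto; lra. }
  assert (CPhi : forall s, continuity_pt Phi s).
  { intros s. unfold Phi. apply cpt_mult; [apply cpt_const|]. apply cpt_plus; auto.
    apply cpt_of. apply (@ex_derive_continuous R_AbsRing R_NormedModule). eexists; apply DHtt. }
  assert (CJ : forall s, continuous J s).
  { intros s. apply of_cpt. unfold J. apply cpt_mult.
    - apply cpt_of. apply (c2d_l tth s y), Ctth.
    - apply cpt_exp, cpt_opp; auto. }
  assert (DI : forall s, is_derive I s (J s)) by (intros; apply FTC_R; auto).
  assert (CW : forall s, continuity_pt W s).
  { intros s. unfold W. apply cpt_minus.
    - apply cpt_mult; [apply cpt_of, (c2d_l tv s y), Ctv | apply cpt_exp, cpt_opp; auto].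
    - apply cpt_mult; [apply cpt_const|]. apply (cpt_of I).
      apply (@ex_derive_continuous R_AbsRing R_NormedModule I s). exists (J s). apply DI. }
  assert (Hex1 : forall s, ex_RInt (fun xi => g1 s xi) y a).
  { intros s. apply Rex_cont. intros; apply c2d_r, Cg1. }
  assert (Hex2 : forall s, ex_RInt (fun xi => g2 s xi) a b).
  { intros s. apply Rex_cont. intros; apply c2d_r, Cg2. }
  assert (HexF : forall s, ex_RInt (fun xi => tF s xi) a b).
  { intros s. apply Rex_cont. intros; apply c2d_r, CtF. }
  assert (A1 : forall s, 0 <= s <= tau -> Bz mu v0 u0 u z s y = v0 y * exp (/ mu * Gt s)).
  { intros s Hs. unfold Bz. f_equal. f_equal. f_equal. apply RInt_inf_eq.
    intros eps He. exists b. intros B HB.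
    set (f := fun xi => (u0 xi - u s xi) * phi z xi).
    assert (E1 : forall xi, Rmin y a < xi < Rmax y a -> g1 s xi = f xi).
    { intros xi Hx. rewrite Rmin_left, Rmax_right in Hx by lra.
      unfold f, g1, tu. rewrite Hphi1 by lra. rewrite !Hcs, Hcx by lra.
      destruct (Hinit xi) as [_ [Hu0 _]]; [lra|]. rewrite Hu0. ring. }
    assert (E2 : forall xi, Rmin a b < xi < Rmax a b -> g2 s xi = f xi).
    { intros xi Hx. rewrite Rmin_left, Rmax_right in Hx by lra.
      unfold f, g2, tu. rewrite Hphi2 by lra. rewrite !Hcs, Hcx by lra.
      destruct (Hinit xi) as [_ [Hu0 _]]; [lra|]. rewrite Hu0. ring. }
    assert (E3 : forall xi, Rmin b B < xi < Rmax b B -> (fun _ => 0) xi = f xi).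
    { intros xi Hx. rewrite Rmin_left, Rmax_right in Hx by lra.
      unfold f. rewrite Hphi3 by lra. ring. }
    assert (ex1 : ex_RInt f y a) by exact (RIex_ext _ _ _ _ E1 (Hex1 s)).
    assert (ex2 : ex_RInt f a b) by exact (RIex_ext _ _ _ _ E2 (Hex2 s)).
    assert (ex3 : ex_RInt f b B) by exact (RIex_ext _ _ _ _ E3 (@ex_RInt_const R_NormedModule b B 0)).
    change (Rabs (Defs.RInt f y B - Gt s) < eps).
    rewrite DRInt_eq by (apply (Rex_Chasles _ _ a); auto; apply (Rex_Chasles _ _ b); auto).
    rewrite (RChasles f y a B) by (auto; apply (Rex_Chasles _ _ b); auto).
    rewrite (RChasles f a b B) by auto.
    rewrite <- (RIext _ _ _ _ E1), <- (RIext _ _ _ _ E2), <- (RIext _ _ _ _ E3), RInt_zero.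
    unfold Gt. rewrite Rplus_0_r, Rminus_eq_0, Rabs_R0. lra. }
  assert (A2 : forall s, 0 <= s <= tau -> Az mu Rg v uy th z s = exp (/ mu * Htt s)).
  { intros s Hs. unfold Az. fold a b. f_equal. f_equal.
    assert (Ein : forall r, 0 <= r <= tau ->
      Defs.RInt (fun xi => mu * uy r xi / v r xi - Rg * th r xi / v r xi) a b = ht r).
    { intros r Hr.
      assert (E : forall xi, Rmin a b < xi < Rmax a b ->
                tF r xi = mu * uy r xi / v r xi - Rg * th r xi / v r xi).
      { intros xi Hx. rewrite Rmin_left, Rmax_right in Hx by lra.
        unfold tF, tuy, tv, tth. rewrite Hcs, Hcx by lra. reflexivity. }
      rewrite DRInt_eq by exact (RIex_ext _ _ _ _ E (HexF r)).
      unfold ht. symmetry. apply RIext. exact E. }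
    assert (E : forall r, Rmin 0 s < r < Rmax 0 s -> ht r =
       Defs.RInt (fun xi => mu * uy r xi / v r xi - Rg * th r xi / v r xi) a b).
    { intros r Hr. rewrite Rmin_left, Rmax_right in Hr by lra. symmetry. apply Ein. lra. }
    rewrite DRInt_eq.
    - unfold Htt. symmetry. apply RIext. exact E.
    - apply (RIex_ext _ _ _ _ E). apply Rex_cont. intros; apply Cht. }
  assert (W0 : W 0 = v0 y).
  { unfold W.
    assert (G0 : Gt 0 = 0).
    { unfold Gt. rewrite (RIext (fun xi => g1 0 xi) (fun _ => 0)), (RIext (fun xi => g2 0 xi) (fun _ => 0)).
      - rewrite !RInt_zero. ring.
      - intros; unfold g2; ring.
      - intros; unfold g1; ring. }
    assert (H0 : Htt 0 = 0) by exact (@RInt_point R_CompleteNormedModule 0 ht).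
    assert (I0 : I 0 = 0) by exact (@RInt_point R_CompleteNormedModule 0 J).
    unfold Phi. rewrite G0, H0, I0.
    unfold tv. rewrite Hcs, Hcx by lra. destruct (Hinit y Hy0) as [Hv0 _]. rewrite Hv0.
    replace (- (/ mu * (0 + 0))) with 0 by ring. rewrite exp_0. ring. }
  assert (DW : forall x, 0 < x < tau -> is_derive W x 0).
  { intros x Hx.
    assert (Hdp : 0 < Rmin x (tau - x)) by (apply Rmin_pos; lra).
    set (dl := mkposreal _ Hdp).
    assert (Hloc : forall s, Rabs (s - x) < dl -> 0 < s < tau).
    { intros s Hs. simpl in Hs. apply Rabs_def2 in Hs.
      pose proof (Rmin_l x (tau - x)); pose proof (Rmin_r x (tau - x)). lra. }
    assert (Dtu : forall s xi, Rabs (s - x) < dl -> is_derive (fun r => tu r xi) s (tut s xi)).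
    { intros s xi Hs. apply Hloc in Hs.
      apply (is_derive_ext_loc (fun r => u r (cx xi))).
      - assert (Hp : 0 < Rmin s (tau - s)) by (apply Rmin_pos; lra).
        exists (mkposreal _ Hp). intros r Hr. apply ball_R in Hr. simpl in Hr.
        apply Rabs_def2 in Hr. pose proof (Rmin_l s (tau - s)); pose proof (Rmin_r s (tau - s)).
        unfold tu. rewrite Hcs by lra. reflexivity.
      - unfold tut. rewrite Hcs by lra. apply is_derive_Reals.
        apply Hdt; [lra|]. pose proof (clamp_in y b xi Hyb). fold cx in H.
        pose proof (HYt s ltac:(lra)). lra. }
    assert (Ctut' : forall s xi, continuity_2d_pt (fun s xi => - tut s xi) s xi).
    { intros; apply continuity_2d_pt_opp; auto. }
    assert (DG1 : is_derive (fun s => RInt (fun xi => g1 s xi) y a) x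
                    (RInt (fun xi => - tut x xi) y a)).
    { apply (param_deriv g1 (fun s xi => - tut s xi) y a x dl); auto.
      intros s xi Hs. apply (dR_val _ _ (0 - tut s xi)); [ring|].
      apply (dR_minus (fun _ => tu 0 xi) (fun r => tu r xi)); [apply dR_const | auto]. }
    assert (DG2 : is_derive (fun s => RInt (fun xi => g2 s xi) a b) x
                    (RInt (fun xi => - tut x xi * (b - xi)) a b)).
    { apply (param_deriv g2 (fun s xi => - tut s xi * (b - xi)) a b x dl); auto.
      - intros s xi Hs. apply (dR_val _ _ ((0 - tut s xi) * (b - xi))); [ring|].
        apply (dR_val _ _ ((0 - tut s xi) * (b - xi) + (tu 0 xi - tu s xi) * 0)); [ring|].
        apply (dR_mult (fun r => tu 0 xi - tu r xi) (fun _ => b - xi)); [|apply dR_const].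
        apply (dR_minus (fun _ => tu 0 xi) (fun r => tu r xi)); [apply dR_const | auto].
      - intros s xi. apply continuity_2d_pt_mult; auto.
        apply continuity_2d_pt_minus; [apply continuity_2d_pt_const | apply continuity_2d_pt_id2]. }
    assert (HxT : 0 < x < T) by lra.
    assert (HYx : forall xi, y <= xi -> Y x < xi).
    { intros xi Hxi. pose proof (HYt x ltac:(lra)). lra. }
    assert (HOx : forall xi, y <= xi -> Omega T Y x xi).
    { intros xi Hxi. split; [lra | apply HYx; auto]. }
    set (Fx := fun xi => mu * uy x xi / v x xi - Rg * th x xi / v x xi).
    assert (DFx : forall xi, y <= xi -> is_derive Fx xi (ut x xi)).
    { intros xi Hxi. destruct (Hdx x xi (HOx xi Hxi)) as [_ [_ [HP [HS _]]]].
      destruct (Heq x xi HxT (HYx xi Hxi)) as [_ [He _]].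
      apply (dR_val _ _ (Sy x xi - Py x xi)); [lra|].
      apply (dR_minus (fun xi => mu * uy x xi / v x xi) (fun xi => Rg * th x xi / v x xi));
        apply is_derive_Reals; auto. }
    assert (CFx : forall xi, y <= xi -> continuity_pt Fx xi).
    { intros xi Hxi. apply cpt_of. apply (@ex_derive_continuous R_AbsRing R_NormedModule).
      exists (ut x xi). apply DFx; auto. }
    assert (Cutx : forall xi, y <= xi -> continuity_pt (fun xi => ut x xi) xi).
    { intros xi Hxi. apply cpt_of. apply (cont_slice T Y); auto. }
    assert (FTC1 : @eq R (RInt (fun xi => ut x xi) y a) (Fx a - Fx y)).
    { apply (@is_RInt_unique R_CompleteNormedModule).
      apply (@is_RInt_derive R_CompleteNormedModule Fx (fun xi => ut x xi) y a).
      - intros xi Hxi. rewrite Rmin_left, Rmax_right in Hxi by lra. apply DFx; lra.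
      - intros xi Hxi. rewrite Rmin_left, Rmax_right in Hxi by lra. apply of_cpt, Cutx; lra. }
    assert (FTC2 : @eq R (RInt (fun xi => ut x xi * (b - xi) - Fx xi) a b) (Fx b * (b - b) - Fx a * (b - a))).
    { apply (@is_RInt_unique R_CompleteNormedModule).
      apply (@is_RInt_derive R_CompleteNormedModule (fun xi => Fx xi * (b - xi))
               (fun xi => ut x xi * (b - xi) - Fx xi) a b).
      - intros xi Hxi. rewrite Rmin_left, Rmax_right in Hxi by lra.
        apply (dR_val _ _ (ut x xi * (b - xi) + Fx xi * (0 - 1))); [ring|].
        apply (dR_mult Fx (fun xi => b - xi)); [apply DFx; lra|].
        apply (dR_minus (fun _ => b) (fun xi => xi)); [apply dR_const | apply dR_id].
      - intros xi Hxi. rewrite Rmin_left, Rmax_right in Hxi by lra. apply of_cpt.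
        apply cpt_minus; [|apply CFx; lra]. apply cpt_mult; [apply Cutx; lra|].
        apply cpt_minus; [apply cpt_const | apply cpt_id]. }
    assert (exA : ex_RInt (fun xi => ut x xi * (b - xi)) a b).
    { apply Rex_cont. intros xi Hxi. rewrite Rmin_left, Rmax_right in Hxi by lra. apply of_cpt.
      apply cpt_mult; [apply Cutx; lra|]. apply cpt_minus; [apply cpt_const | apply cpt_id]. }
    assert (exF : ex_RInt Fx a b).
    { apply Rex_cont. intros xi Hxi. rewrite Rmin_left, Rmax_right in Hxi by lra. apply of_cpt, CFx; lra. }
    rewrite (Rminus_int (fun xi => ut x xi * (b - xi)) Fx a b exA exF) in FTC2.
    assert (Eht : @eq R (ht x) (RInt Fx a b)).
    { unfold ht. apply RIext. intros xi Hxi. rewrite Rmin_left, Rmax_right in Hxi by lra.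
      unfold tF, tuy, tv, tth, Fx. rewrite Hcs, Hcx by lra. reflexivity. }
    assert (EP1 : @eq R (RInt (fun xi => - tut x xi) y a) (- RInt (fun xi => ut x xi) y a)).
    { rewrite (RIext (fun xi => - tut x xi) (fun xi => -1 * ut x xi)).
      - rewrite Rscal_int; [change (-1 * RInt (ut x) y a = - RInt (ut x) y a :> R); ring|]. apply Rex_cont. intros xi Hxi.
        rewrite Rmin_left, Rmax_right in Hxi by lra. apply of_cpt, Cutx; lra.
      - intros xi Hxi. rewrite Rmin_left, Rmax_right in Hxi by lra.
        unfold tut. rewrite Hcs, Hcx by lra. ring. }
    assert (EP2 : @eq R (RInt (fun xi => - tut x xi * (b - xi)) a b) (- RInt (fun xi => ut x xi * (b - xi)) a b)).
    { rewrite (RIext (fun xi => - tut x xi * (b - xi)) (fun xi => -1 * (ut x xi * (b - xi)))).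
      - rewrite Rscal_int; [change (-1 * RInt (fun xi => ut x xi * (b - xi)) a b = - RInt (fun xi => ut x xi * (b - xi)) a b :> R); ring|]. exact exA.
      - intros xi Hxi. rewrite Rmin_left, Rmax_right in Hxi by lra.
        unfold tut. rewrite Hcs, Hcx by lra. ring. }
    assert (KEY : @eq R (RInt (fun xi => - tut x xi) y a + RInt (fun xi => - tut x xi * (b - xi)) a b + ht x) (Fx y)).
    { rewrite EP1, EP2, FTC1, Eht. rewrite Hba in FTC2. lra. }
    set (P1 := RInt (fun xi => - tut x xi) y a) in *.
    set (P2 := RInt (fun xi => - tut x xi * (b - xi)) a b) in *.
    assert (DGt : is_derive Gt x (P1 + P2)) by (unfold Gt; apply dR_plus; auto).
    assert (DPhi : is_derive Phi x (/ mu * (P1 + P2 + ht x))) by (unfold Phi; apply dR_scal, dR_plus; auto).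
    assert (DE : is_derive (fun s => exp (- Phi s)) x (exp (- Phi x) * (- (/ mu * (P1 + P2 + ht x))))).
    { apply (dR_exp (fun s => - Phi s)). apply dR_opp. auto. }
    assert (DV : is_derive (fun s => tv s y) x (vt x y)).
    { apply (is_derive_ext_loc (fun r => v r y)).
      - exists dl. intros r Hr. apply ball_R in Hr. apply Hloc in Hr.
        unfold tv. rewrite Hcs, Hcx by lra. reflexivity.
      - apply is_derive_Reals. apply Hdt; auto. apply HYx; lra. }
    unfold W.
    apply (dR_val _ _ ((vt x y * exp (- Phi x) + tv x y * (exp (- Phi x) * (- (/ mu * (P1 + P2 + ht x)))))
                        - Rg / mu * J x)).
    2: { apply (dR_minus (fun s => tv s y * exp (- Phi s)) (fun s => Rg / mu * I s)).
         - apply (dR_mult (fun s => tv s y) (fun s => exp (- Phi s))); auto.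
         - apply dR_scal; auto. }
    rewrite KEY. unfold J, Fx, tv, tth. rewrite Hcs, Hcx by lra.
    destruct (Heq x y HxT (HYx y ltac:(lra))) as [Hvt _]. rewrite Hvt.
    assert (Hvx : v x y <> 0) by (pose proof (Hvpos x y (HOx y ltac:(lra))); lra).
    field. split; lra.
  }

  assert (WT : W t = v0 y).
  { destruct (Req_dec t 0) as [->|Ht0]; [exact W0|].
    destruct (MVT_gen W 0 t (fun _ => 0)) as [c [_ Hc]].
    - intros x Hx. rewrite Rmin_left, Rmax_right in Hx by lra. apply DW; lra.
    - intros; apply CW.
    - lra. }
  assert (Hv0 : 0 < v0 y).
  { destruct (Hinit y Hy0) as [Hv _]. rewrite <- Hv. apply Hvpos. apply HR; lra. }
  assert (BA : forall s, 0 <= s <= tau ->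
             Bz mu v0 u0 u z s y * Az mu Rg v uy th z s = v0 y * exp (Phi s)).
  { intros s Hs. rewrite A1, A2 by auto. unfold Phi. rewrite Rmult_plus_distr_l, exp_plus. ring. }
  assert (E : forall s, Rmin 0 t < s < Rmax 0 t -> exp (Phi t) * J s =
     Bz mu v0 u0 u z t y * Az mu Rg v uy th z t / (Bz mu v0 u0 u z s y * Az mu Rg v uy th z s) * th s y).
  { intros s Hs. rewrite Rmin_left, Rmax_right in Hs by lra.
    rewrite (BA s), (BA t) by lra. unfold J, tth. rewrite Hcs, Hcx by lra. rewrite exp_Ropp.
    field. split; [apply Rgt_not_eq, exp_pos | lra]. }
  assert (exJ : ex_RInt J 0 t) by (apply Rex_cont; intros; apply CJ).
  assert (exJ' : ex_RInt (fun s => exp (Phi t) * J s) 0 t).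
  { apply Rex_cont. intros s _. apply of_cpt. apply cpt_mult; [apply cpt_const | apply cpt_of, CJ]. }
  rewrite DRInt_eq by exact (RIex_ext _ _ _ _ E exJ').
  rewrite <- (RIext _ _ _ _ E), Rscal_int by exact exJ.
  rewrite (BA t) by lra.
  unfold W, tv in WT. rewrite Hcs, Hcx in WT by lra. rewrite exp_Ropp in WT.
  fold (I t).
  assert (He : 0 < exp (Phi t)) by apply exp_pos.
  assert (Hvt : v t y = (v t y * / exp (Phi t)) * exp (Phi t)) by (field; lra).
  rewrite Hvt.
  replace (v t y * / exp (Phi t)) with (v0 y + Rg / mu * I t) by lra.
  ring.
Qed.
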